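(* Let $\{\omega_k\}_{k\ge 0}$, $\omega_k=(Z_k,E_k,-\lambda_k)$, be generated by the iteration below with parameters $(W_k,\theta_k,\beta_k)$ ($\theta_k,\beta_k$ entrywise positive). Then for every $k\ge 0$ and every triple $\omega=(Z,E,-\lambda)\in\mathbb{R}^{d\times n}\times\mathbb{R}^{m\times n}\times\mathbb{R}^{m\times n}$, with $u=(Z,E)$ and $u_{k+1}=(Z_{k+1},E_{k+1})$, $$h(u)-h(u_{k+1})+\big\langle \omega-\omega_{k+1},\ \mathcal{F}_k(\omega_{k+1})+\mathcal{G}_k(E_k-E_{k+1})+\mathcal{H}_k(\omega_{k+1}-\omega_k)\big\rangle\ \ge 0 .$$
   Context: Let $A\in\mathbb{R}^{m\times d}$, $X\in\mathbb{R}^{m\times n}$, and let $f:\mathbb{R}^{d\times n}\to\mathbb{R}$, $g:\mathbb{R}^{m\times n}\to\mathbb{R}$ be convex. Consider the problem $\min_{Z,E} f(Z)+g(E)$ subject to $X=AZ+E$, and write $h(u)=f(Z)+g(E)$ for $u=(Z,E)$. Triples are written $\omega=(Z,E,-\lambda)$ with $\lambda\in\mathbb{R}^{m\times n}$ a Lagrange multiplier; the inner product of triples is the sum of the componentwise Frobenius inner products. $\circ$ is the entrywise (Hadamard) product, and for an entrywise positive matrix $\beta$, $\beta^{-1}$ denotes its entrywise reciprocal. For a matrix $M$ and entrywise positive $\theta$ of the same size, write $\tfrac{\theta}{2}\circ\|M\|_F^2:=\tfrac12\sum_{ij}\theta_{ij}M_{ij}^2$. Iteration (D-LADMM): given $(Z_k,E_k,\lambda_k)$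 and parameters $W_k\in\mathbb{R}^{m\times d}$, $\theta_k\in\mathbb{R}^{d\times n}$, $\beta_k\in\mathbb{R}^{m\times n}$ with $\theta_k,\beta_k$ entrywise positive, $Z_{k+1}=\arg\min_Z\{ f(Z)+\tfrac{\theta_k}{2}\circ\|Z-Z_k+\theta_k^{-1}\circ W_k^\top(\lambda_k+\beta_k\circ(AZ_k+E_k-X))\|_F^2\}$, $E_{k+1}=\arg\min_E\{g(E)+\tfrac{\beta_k}{2}\circ\|E-X+AZ_{k+1}+\beta_k^{-1}\circ\lambda_k\|_F^2\}$, $\lambda_{k+1}=\lambda_k+\beta_k\circ(AZ_{k+1}+E_{k+1}-X)$. Operators: $\mathcal{D}_k(Z)=\theta_k\circ Z-W_k^\top(\beta_k\circ(AZ))$; $\mathcal{H}_k(Z,E,-\lambda)=(\mathcal{D}_k(Z),\ \beta_k\circ E,\ \beta_k^{-1}\circ(-\lambda))$; $\mathcal{F}_k(Z,E,-\lambda)=(W_k^\top\lambda,\ \lambda,\ AZ+E-X)$; for $M\in\mathbb{R}^{m\times n}$, $\mathcal{G}_k(M)=(W_k^\top(\beta_k\circ M),\ \beta_k\circ M,\ 0)$. Standing assumption of the paper: for $\sigma\ge0$, $\mathcal{S}(\sigma,A)$ is the set of triples $(W,\theta,\beta)$ with $\|W-A\|\le\sigma$ (spectral norm), $\theta,\beta$ entrywise positive, and the linear operator $Z\mapsto\theta\circ Z-W^\top(\beta\circ(AZ))$ positive definite (i.e. $\langle \cdot(Z),Z\rangle>0$ for all $Z\ne0$); it is assumed that there is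 a constant $c$ such that $\mathcal{S}(\sigma,A)\neq\emptyset$ for all $0\le\sigma\le c$. *)

(* Defs.v *)
From HB Require Import structures.
From mathcomp Require Import all_boot all_order all_algebra.
Set Implicit Arguments. Unset Strict Implicit. Unset Printing Implicit Defensive.
Import Order.TTheory GRing.Theory Num.Theory.
Local Open Scope ring_scope.

Section Defs.
Variable R : realFieldType.

Definition hada {p q} (a b : 'M[R]_(p, q)) : 'M[R]_(p, q) :=
  \matrix_(i, j) (a i j * b i j).
Definition einv {p q} (a : 'M[R]_(p, q)) : 'M[R]_(p, q) :=
  \matrix_(i, j) (a i j)^-1.
Definition epos {p q} (a : 'M[R]_(p, q)) : Prop := forall i j, 0 < a i j.
Definition frob {p q} (a b : 'M[R]_(p, q)) : R :=
  \sum_(i < p) \sum_(j < q) a i j * b i j.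
(* weighted squared norm: (theta/2) o ||M||_F^2 = 1/2 sum theta_ij M_ij^2 *)
Definition wsq {p q} (theta M : 'M[R]_(p, q)) : R :=
  2^-1 * \sum_(i < p) \sum_(j < q) theta i j * M i j ^+ 2.

Definition convex_fun {p q} (f : 'M[R]_(p, q) -> R) : Prop :=
  forall (x y : 'M[R]_(p, q)) (t : R), 0 <= t -> t <= 1 ->
    f (t *: x + (1 - t) *: y) <= t * f x + (1 - t) * f y.

Definition is_argmin {T : Type} (phi : T -> R) (x : T) : Prop :=
  forall y, phi x <= phi y.

Variables m d n : nat.

Definition triple := ('M[R]_(d, n) * 'M[R]_(m, n) * 'M[R]_(m, n))%type.
Definition mk_omega (Z : 'M[R]_(d, n)) (E lam : 'M[R]_(m, n)) : triple :=
  (Z, E, - lam).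
Definition tadd (a b : triple) : triple :=
  (a.1.1 + b.1.1, a.1.2 + b.1.2, a.2 + b.2).
Definition tsub (a b : triple) : triple :=
  (a.1.1 - b.1.1, a.1.2 - b.1.2, a.2 - b.2).
Definition tinner (a b : triple) : R :=
  frob a.1.1 b.1.1 + frob a.1.2 b.1.2 + frob a.2 b.2.

Variables (A : 'M[R]_(m, d)) (X : 'M[R]_(m, n)).

Definition Dop (W : 'M[R]_(m, d)) (theta : 'M[R]_(d, n)) (beta : 'M[R]_(m, n))
  (Z : 'M[R]_(d, n)) : 'M[R]_(d, n) :=
  hada theta Z - W^T *m hada beta (A *m Z).
Definition Hop W theta beta (w : triple) : triple :=
  (Dop W theta beta w.1.1, hada beta w.1.2, hada (einv beta) w.2).
(* F_k(Z, E, -lambda) = (W^T lambda, lambda, A Z + E - X), lambda = - third *)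
Definition Fop (W : 'M[R]_(m, d)) (w : triple) : triple :=
  (W^T *m (- w.2), - w.2, A *m w.1.1 + w.1.2 - X).
Definition Gop (W : 'M[R]_(m, d)) (beta : 'M[R]_(m, n)) (M : 'M[R]_(m, n))
  : triple := (W^T *m hada beta M, hada beta M, 0).

End Defs.

(* Main.v *)
Require Import Defs.
From HB Require Import structures.
From mathcomp Require Import all_boot all_order all_algebra.
From mathcomp Require Import ring lra.
Import Order.TTheory GRing.Theory Num.Theory.
Local Open Scope ring_scope.

Section H.
Variable R : realFieldType.

Lemma wsq_ge0 p q (th M : 'M[R]_(p,q)) : epos th -> 0 <= wsq th M.
Proof.
move=> hp; rewrite /wsq mulr_ge0 ?invr_ge0 ?ler0n //.
apply: sumr_ge0 => i _; apply: sumr_ge0 => j _.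
by rewrite mulr_ge0 ?sqr_ge0 // ltW.
Qed.

Lemma wsq_quad p q (th Z Z1 D : 'M[R]_(p,q)) (t : R) :
  wsq th (t *: Z + (1 - t) *: Z1 + D) =
  wsq th (Z1 + D) + t * frob (Z - Z1) (hada th (Z1 + D)) + t ^+ 2 * wsq th (Z - Z1).
Proof.
rewrite /wsq /frob !mulr_sumr -!big_split; apply: eq_bigr => i _ /=.
rewrite !mulr_sumr -!big_split; apply: eq_bigr => j _ /=.
by rewrite !mxE; field.
Qed.

Lemma lim_arg (a c : R) : 0 <= c -> (forall t, 0 < t -> t <= 1 -> 0 <= a + t * c) -> 0 <= a.
Proof.
move=> hc H; rewrite leNgt; apply/negP => ha.
have hs : 0 < - a + c by lra.
have := H ((- a) / (- a + c)).
rewrite divr_gt0 ?oppr_gt0 // ler_pdivrMr // mul1r.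
have -> : a + - a / (- a + c) * c = (- (a * a)) / (-a + c) by field; lra.
rewrite pmulr_lge0 ?invr_gt0 //.
move=> /(_ isT); nra.
Qed.

Lemma opt p q (f : 'M[R]_(p,q) -> R) th D Z1 : convex_fun f -> epos th ->
  (forall Y, f Z1 + wsq th (Z1 + D) <= f Y + wsq th (Y + D)) ->
  forall Z, 0 <= f Z - f Z1 + frob (Z - Z1) (hada th (Z1 + D)).
Proof.
move=> cf hp H Z.
apply: (@lim_arg _ (wsq th (Z - Z1))); first exact: wsq_ge0.
move=> t t0 t1.
have h1 := H (t *: Z + (1 - t) *: Z1).
have h2 := cf Z Z1 t (ltW t0) t1.
rewrite wsq_quad in h1.
have : 0 <= t * (f Z - f Z1 + frob (Z - Z1) (hada th (Z1 + D)) + t * wsq th (Z - Z1)).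
  set w := wsq th (Z - Z1) in h1 *; set fr := frob _ _ in h1 *.
  nra.
by rewrite pmulr_rge0.
Qed.
Lemma frob0 p q (a : 'M[R]_(p,q)) : frob a 0 = 0.
Proof. by rewrite /frob big1 // => i _; rewrite big1 // => j _; rewrite mxE mulr0. Qed.
End H.

Theorem lemma1 (R : realFieldType) (m d n : nat)
  (A : 'M[R]_(m, d)) (X : 'M[R]_(m, n))
  (f : 'M[R]_(d, n) -> R) (g : 'M[R]_(m, n) -> R)
  (Zs : nat -> 'M[R]_(d, n)) (Es lams : nat -> 'M[R]_(m, n))
  (Ws : nat -> 'M[R]_(m, d)) (thetas : nat -> 'M[R]_(d, n))
  (betas : nat -> 'M[R]_(m, n)) :
  convex_fun f -> convex_fun g ->
  (forall k, epos (thetas k)) -> (forall k, epos (betas k)) ->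
  (forall k, is_argmin (fun Z => f Z + wsq (thetas k)
      (Z - Zs k + hada (einv (thetas k))
         ((Ws k)^T *m (lams k + hada (betas k) (A *m Zs k + Es k - X)))))
      (Zs k.+1)) ->
  (forall k, is_argmin (fun E => g E + wsq (betas k)
      (E - X + A *m Zs k.+1 + hada (einv (betas k)) (lams k)))
      (Es k.+1)) ->
  (forall k, lams k.+1 = lams k + hada (betas k) (A *m Zs k.+1 + Es k.+1 - X)) ->
  forall (k : nat) (Z : 'M[R]_(d, n)) (E lam : 'M[R]_(m, n)),
    let w := mk_omega Z E lam in
    let wk := mk_omega (Zs k) (Es k) (lams k) in
    let wk1 := mk_omega (Zs k.+1) (Es k.+1) (lams k.+1) in
    0 <= f Z + g E - (f (Zs k.+1) + g (Es k.+1))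
         + tinner (tsub w wk1)
             (tadd (tadd (Fop A X (Ws k) wk1)
                         (Gop (Ws k) (betas k) (Es k - Es k.+1)))
                   (Hop A (Ws k) (thetas k) (betas k) (tsub wk1 wk))).
Proof.
move=> cf cg hth hbe hZ hE hl k Z E lam; cbv zeta.
set th := thetas k; set be := betas k; set W := Ws k.
set V := lams k + hada be (A *m Zs k + Es k - X).
set DZ := hada (einv th) (W^T *m V) - Zs k.
set DE := - X + A *m Zs k.+1 + hada (einv be) (lams k).
have kZ := @opt R d n f th DZ (Zs k.+1) cf (hth k).
have kE := @opt R m n g be DE (Es k.+1) cg (hbe k).
rewrite /tinner /mk_omega /tsub /tadd /Fop /Gop /Hop /Dop /=.
have bne : forall i j, be i j != 0 by move=> i j; rewrite gt_eqF // hbe.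
have tne : forall i j, th i j != 0 by move=> i j; rewrite gt_eqF // hth.
have hZ' : forall Y, f (Zs k.+1) + wsq th (Zs k.+1 + DZ) <= f Y + wsq th (Y + DZ).
  move=> Y; have := hZ k Y; rewrite /= -/th -/be -/W -/V.
  have eZ : forall Y, Y - Zs k + hada (einv th) (W^T *m V) = Y + DZ.
    by move=> Y'; rewrite /DZ addrA [LHS]addrAC.
  by rewrite !eZ.
have hE' : forall Y, g (Es k.+1) + wsq be (Es k.+1 + DE) <= g Y + wsq be (Y + DE).
  by move=> Y; have := hE k Y; rewrite /= -/be /DE !addrA.
have eZm : W^T *m - - lams k.+1 + W^T *m hada be (Es k - Es k.+1) +
      (hada th (Zs k.+1 - Zs k) -
       W^T *m hada be (A *m (Zs k.+1 - Zs k))) = hada th (Zs k.+1 + DZ).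
  have -> : hada th (Zs k.+1 + DZ) = hada th (Zs k.+1 - Zs k) + W^T *m V.
    apply/matrixP => i j; rewrite /DZ; set M := W^T *m V.
    rewrite !mxE; field; exact: tne.
  have P : W^T *m lams k.+1 + W^T *m hada be (Es k - Es k.+1)
     - W^T *m hada be (A *m (Zs k.+1 - Zs k)) = W^T *m V.
    rewrite -mulmxDr -mulmxBr; congr (_ *m _).
    rewrite (hl k) -/be mulmxBr /V; set a1 := A *m Zs k.+1; set a0 := A *m Zs k.
    apply/matrixP => i j; rewrite !mxE; ring.
  rewrite opprK.
  move: P; set a := W^T *m lams k.+1; set b := W^T *m hada be _;
    set c := W^T *m hada be _; set v := W^T *m V; set h := hada th _.
  move=> P; apply/matrixP => i j.
  have Pij : (a + b - c) i j = v i j by rewrite P.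
  rewrite !mxE in Pij.
  rewrite !mxE; lra.
have eE : - - lams k.+1 + hada be (Es k - Es k.+1) + hada be (Es k.+1 - Es k)
     = hada be (Es k.+1 + DE).
  rewrite /DE (hl k) -/be; set a1 := A *m Zs k.+1.
  apply/matrixP => i j; rewrite !mxE; field; exact: bne.
have e3 : A *m Zs k.+1 + Es k.+1 - X + 0 +
      hada (einv be) (- lams k.+1 - - lams k) = 0.
  rewrite (hl k) -/be; set a1 := A *m Zs k.+1.
  apply/matrixP => i j; rewrite !mxE; field; exact: bne.
rewrite eZm eE e3 frob0.
have := kZ hZ' Z; have := kE hE' E; lra.
Qed.
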